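(* Let $n\ge 3$, $0<m<\frac{n-2}{n}$, $m\ne\frac{n-2}{n+2}$, $\beta>0$, $\lambda>0$. Let $v$ be the radially symmetric solution described in the context, $w(s)=r^2v(r)^{1-m}$ with $s=\log r$, and $h(s)=w(s)-\frac{2(n-1)(n-2-nm)}{(1-m)\beta}s$. Then \[ \lim_{s\to\infty}\frac{h(s)}{\log s}=\lim_{s\to\infty}s\,h_s(s)=-\frac{(n-1)[n-2-(n+2)m]}{(1-m)\beta}. \]
   Context: $v=v(r)$, $r=|x|$, is the unique radially symmetric positive classical solution of $\frac{n-1}{m}\Delta v^m+\frac{2\beta}{1-m}v+\beta x\cdot\nabla v=0$ in $\mathbb{R}^n$ with $v(0)=\lambda$. *)

(* Defs.v *)
From Stdlib Require Export Reals.
From Coquelicot Require Export Coquelicot.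
Open Scope R_scope.

Definition vpow (v : R -> R) (m : R) : R -> R := fun r => Rpower (v r) m.

(* Radial form of  (n-1)/m Δ(v^m) + 2β/(1-m) v + β x·∇v = 0  at r > 0:
   Δ u = u'' + (n-1)/r u' for radial u, and x·∇v = r v'. *)
Definition radial_eq (n m beta : R) (v : R -> R) (r : R) : Prop :=
  (n - 1) / m * (Derive (Derive (vpow v m)) r + (n - 1) / r * Derive (vpow v m) r)
  + 2 * beta / (1 - m) * v r + beta * r * Derive v r = 0.

Definition is_radial_solution (n m beta lambda : R) (v : R -> R) : Prop :=
  (forall r, 0 <= r -> 0 < v r) /\
  v 0 = lambda /\
  filterlim v (at_right 0) (locally lambda) /\
  filterlim (Derive (vpow v m)) (at_right 0) (locally 0) /\
  (forall r, 0 < r -> ex_derive v r) /\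
  (forall r, 0 < r -> ex_derive (vpow v m) r) /\
  (forall r, 0 < r -> ex_derive (Derive (vpow v m)) r) /\
  (forall r, 0 < r -> radial_eq n m beta v r).

Definition wfun (m : R) (v : R -> R) : R -> R :=
  fun s => exp (2 * s) * Rpower (v (exp s)) (1 - m).

Definition hfun (n m beta : R) (v : R -> R) : R -> R :=
  fun s => wfun m v s - 2 * (n - 1) * (n - 2 - n * m) / ((1 - m) * beta) * s.

(* Main.v *)
Require Import Defs.
From Stdlib Require Import Reals.
From Coquelicot Require Import Coquelicot.
Open Scope R_scope.
From Stdlib Require Import Lra Psatz Classical.


Lemma cont_eps (f : R -> R) x : ex_derive f x ->
  forall eps, 0 < eps -> exists d, 0 < d /\ forall y, Rabs (y - x) < d -> Rabs (f y - f x) < eps.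
Proof.
  intros Hd eps Heps.
  pose proof (ex_derive_continuous f x Hd) as Hc.
  apply (proj1 (filterlim_locally _ _)) with (eps := mkposreal eps Heps) in Hc.
  destruct Hc as [d Hd']. exists d. split. apply cond_pos.
  intros y Hy. apply (Hd' y). exact Hy.
Qed.

Lemma mvt (f : R -> R) a b : (forall t, ex_derive f t) -> a < b ->
  exists c, a < c < b /\ f b - f a = Derive f c * (b - a).
Proof.
  intros Hd Hab.
  set (pr := fun t => ex_derive_Reals_0 f t (Hd t)).
  destruct (MVT_cor1 f a b pr Hab) as [c [E Hc]].
  exists c. split; auto. rewrite E. rewrite Derive_Reals. reflexivity.
Qed.

Lemma mvt_le (f : R -> R) a b c : (forall t, ex_derive f t) -> a <= b ->
  (forall t, a < t < b -> Derive f t <= c) -> f b - f a <= c * (b - a).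
Proof.
  intros Hd Hab H. destruct (Req_dec a b) as [->|Hne]. lra.
  destruct (mvt f a b Hd) as [x [Hx E]]. lra. rewrite E.
  apply Rmult_le_compat_r. lra. apply H; auto.
Qed.

Lemma mvt_ge (f : R -> R) a b c : (forall t, ex_derive f t) -> a <= b ->
  (forall t, a < t < b -> c <= Derive f t) -> c * (b - a) <= f b - f a.
Proof.
  intros Hd Hab H. destruct (Req_dec a b) as [->|Hne]. lra.
  destruct (mvt f a b Hd) as [x [Hx E]]. lra. rewrite E.
  apply Rmult_le_compat_r. lra. apply H; auto.
Qed.

Lemma LBL (f : R -> R) t0 K d : (forall t, ex_derive f t) -> 0 < d -> f t0 <= K ->
  (forall t, t0 <= t -> K < f t < K + d -> Derive f t <= 0) ->
  forall t, t0 <= t -> f t <= K.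
Proof.
  intros Hd Hdp H0 Hb t1 Ht1.
  destruct (Rle_or_lt (f t1) K) as [|Hlt]; auto. exfalso.
  set (E := fun t => t0 <= t <= t1 /\ f t <= K).
  destruct (completeness E) as [c [Hub Hlub]].
  { exists t1. intros x [Hx _]. lra. }
  { exists t0. split. lra. auto. }
  assert (Hc0 : t0 <= c) by (apply Hub; split; [lra|auto]).
  assert (Hc1 : c <= t1) by (apply Hlub; intros x [Hx _]; lra).
  assert (Hout : forall t, c < t <= t1 -> K < f t).
  { intros t Ht. destruct (Rle_or_lt (f t) K) as [Hf|Hf]; auto.
    assert (t <= c) by (apply Hub; split; [lra|auto]). lra. }
  assert (Hfc : f c <= K).
  { destruct (Rle_or_lt (f c) K) as [|Hfc]; auto. exfalso.
    destruct (cont_eps f c (Hd c) (f c - K)) as [e [He Hy]]. lra.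
    assert (Hnot : ~ is_upper_bound E (c - e/2)).
    { intro Hu. pose proof (Hlub _ Hu). lra. }
    apply Hnot. intros x [Hx Hfx].
    destruct (Rle_or_lt x (c - e/2)) as [|Hx2]; auto.
    assert (x <= c) by (apply Hub; split; auto).
    pose proof (Hy x ltac:(rewrite Rabs_left1; lra)) as Ha. apply Rabs_def2 in Ha. lra. }
  assert (Hct : c < t1) by (destruct (Req_dec c t1); subst; lra).
  destruct (cont_eps f c (Hd c) (K + d - f c)) as [e [He Hy]]. lra.
  set (t2 := Rmin (c + e/2) t1).
  assert (Ht2 : c < t2 <= t1) by (unfold t2; apply Rmin_case_strong; intros; lra).
  pose proof (mvt_le f c t2 0 Hd ltac:(lra)) as Hm.
  assert (f t2 - f c <= 0 * (t2 - c)).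
  { apply Hm. intros t Ht. apply Hb. lra. split. apply Hout; lra.
    pose proof (Hy t ltac:(rewrite Rabs_right; [|lra]; unfold t2 in Ht;
      revert Ht; apply Rmin_case_strong; intros; lra)) as Ha. apply Rabs_def2 in Ha. lra. }
  pose proof (Hout t2 Ht2). lra.
Qed.

Lemma EVB (f : R -> R) T c : (forall t, ex_derive f t) -> 0 < c ->
  (forall t, T <= t -> 0 < f t -> Derive f t <= - c) ->
  exists T', forall t, T' <= t -> f t <= 0.
Proof.
  intros Hd Hc H.
  destruct (classic (exists t1, T <= t1 /\ f t1 <= 0)) as [[t1 [Ht1 Hf1]]|Hn].
  - exists t1. apply (LBL f t1 0 1 Hd ltac:(lra) Hf1).
    intros t Ht Hb. pose proof (H t ltac:(lra) ltac:(lra)). lra.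
  - exfalso. set (t2 := T + Rabs (f T) / c + 1).
    assert (Hpos : forall t, T <= t -> 0 < f t).
    { intros t Ht. destruct (Rlt_or_le 0 (f t)); auto. exfalso; apply Hn; eauto. }
    assert (HT2 : T <= t2).
    { unfold t2. assert (0 <= Rabs (f T) / c) by (apply Rdiv_le_0_compat; [apply Rabs_pos|lra]). lra. }
    pose proof (mvt_le f T t2 (-c) Hd HT2) as Hm.
    assert (f t2 - f T <= - c * (t2 - T)).
    { apply Hm. intros t Ht. apply H. lra. apply Hpos. lra. }
    pose proof (Hpos t2 HT2).
    assert (- c * (t2 - T) = - Rabs (f T) - c).
    { unfold t2. field. lra. }
    pose proof (Rle_abs (f T)). lra.
Qed.

Lemma abs_le_e x e : Rabs x <= e -> - e <= x <= e.
Proof. intros H. pose proof (Rle_abs x). pose proof (Rle_abs (-x)). rewrite Rabs_Ropp in *. lra. Qed.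

Lemma abs_lt_e x e : Rabs x < e -> - e < x < e.
Proof. intros H. pose proof (Rle_abs x). pose proof (Rle_abs (-x)). rewrite Rabs_Ropp in *. lra. Qed.

Definition ev_lim (f : R -> R) (l : R) :=
  forall eps, 0 < eps -> exists T, forall t, T <= t -> Rabs (f t - l) <= eps.

Lemma ev_lim_is_lim f l : ev_lim f l -> is_lim f p_infty l.
Proof.
  intros H. apply (proj2 (filterlim_locally _ _)). intros eps.
  destruct (H (eps/2)) as [T HT]. pose proof (cond_pos eps). lra.
  exists T. intros x Hx. pose proof (HT x ltac:(lra)). intros.
  change (Rabs (f x - l) < eps). pose proof (cond_pos eps). lra.
Qed.

Lemma LIMDER (f : R -> R) l : (forall t, ex_derive f t) -> ev_lim (Derive f) l ->
  ev_lim (fun t => f t / t) l.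
Proof.
  intros Hd H eps Heps.
  destruct (H (eps/2) ltac:(lra)) as [T HT].
  set (T0 := Rmax T 1).
  set (B := Rabs (f T0 - l * T0)).
  exists (T0 + 2 * B / eps + 1). intros t Ht.
  assert (HT0 : T <= T0 /\ 1 <= T0) by (unfold T0; split; [apply Rmax_l|apply Rmax_r]).
  assert (HB : 0 <= 2 * B / eps) by (apply Rdiv_le_0_compat; [unfold B; pose proof (Rabs_pos (f T0 - l*T0)); lra| lra]).
  pose proof (mvt_le f T0 t (l + eps/2) Hd ltac:(lra)) as H1.
  pose proof (mvt_ge f T0 t (l - eps/2) Hd ltac:(lra)) as H2.
  assert (f t - f T0 <= (l + eps/2) * (t - T0)).
  { apply H1. intros s Hs. pose proof (HT s ltac:(lra)) as Ha. apply abs_le_e in Ha. lra. }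
  assert ((l - eps/2) * (t - T0) <= f t - f T0).
  { apply H2. intros s Hs. pose proof (HT s ltac:(lra)) as Ha. apply abs_le_e in Ha. lra. }
  assert (Htp : 0 < t) by lra.
  assert (HBt : B <= eps / 2 * t).
  { assert (2 * B / eps * (eps/2) = B) by (field; lra).
    assert (2 * B / eps * (eps / 2) <= t * (eps/2)) by (apply Rmult_le_compat_r; lra). nra. }
  assert (HBb : - B <= f T0 - l * T0 <= B) by (apply abs_le_e; unfold B; lra).
  assert (Hk : Rabs (f t - l * t) <= eps * t) by (apply Rabs_le; split; nra).
  replace (f t / t - l) with ((f t - l * t) / t) by (field; lra).
  rewrite Rabs_div by lra. rewrite (Rabs_right t) by lra.
  apply (Rmult_le_reg_r t); [lra|]. unfold Rdiv. rewrite Rmult_assoc, Rinv_l, Rmult_1_r by lra. lra.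
Qed.


Lemma is_lim_ev f (l : R) : is_lim f p_infty l -> ev_lim f l.
Proof.
  intros H eps Heps.
  destruct (proj1 (filterlim_locally _ _) H (mkposreal eps Heps)) as [M HM].
  exists (M + 1). intros t Ht. pose proof (HM t ltac:(lra)) as Hb.
  change (Rabs (f t - l) < eps) in Hb. lra.
Qed.

Lemma ev_lim_plus f g lf lg : ev_lim f lf -> ev_lim g lg -> ev_lim (fun t => f t + g t) (lf + lg).
Proof. intros. apply is_lim_ev. apply is_lim_plus'; apply ev_lim_is_lim; auto. Qed.

Lemma ev_lim_minus f g lf lg : ev_lim f lf -> ev_lim g lg -> ev_lim (fun t => f t - g t) (lf - lg).
Proof. intros. apply is_lim_ev. apply is_lim_minus'; apply ev_lim_is_lim; auto. Qed.

Lemma ev_lim_mult f g lf lg : ev_lim f lf -> ev_lim g lg -> ev_lim (fun t => f t * g t) (lf * lg).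
Proof. intros. apply is_lim_ev.
  apply (is_lim_mult f g p_infty lf lg); try apply ev_lim_is_lim; auto. simpl; auto. Qed.

Lemma ev_lim_const c : ev_lim (fun _ => c) c.
Proof. intros eps He. exists 0. intros. rewrite Rminus_diag, Rabs_R0. lra. Qed.

Lemma ev_lim_ext f g l T : (forall t, T <= t -> f t = g t) -> ev_lim f l -> ev_lim g l.
Proof.
  intros E H eps He. destruct (H eps He) as [T1 H1]. exists (Rmax T T1). intros t Ht.
  rewrite <- E. apply H1. pose proof (Rmax_r T T1). lra. pose proof (Rmax_l T T1). lra.
Qed.

Lemma ev_lim_squeeze f l : (forall eps, 0 < eps -> exists T, forall t, T <= t -> l - eps <= f t <= l + eps) -> ev_lim f l.
Proof.
  intros H eps He. destruct (H eps He) as [T HT]. exists T. intros t Ht.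
  apply Rabs_le. pose proof (HT t Ht). lra.
Qed.


Lemma up_arith F0 d e t q B G : 0 < F0 -> 0 < d -> d <= 1/2 -> e * (2 * (2 + d)) = F0 * d ->
  4 / (F0 * d) + 1 <= t -> 0 <= q <= 1 -> (F0 - e) * t <= B -> G <= F0 + e -> 1 + d < t * q ->
  q + t * (G - B * q) <= -1.
Proof.
  intros HF Hd Hd2 He Ht Hq HB HG Htq.
  assert (He0 : 0 < e) by nra.
  assert (He1 : e < F0) by nra.
  assert (Hk : 4 / (F0 * d) * (F0 * d) = 4) by (field; lra).
  assert (0 < 4 / (F0 * d)) by (apply Rdiv_lt_0_compat; nra).
  assert (H1 : (F0 - e) * t * q <= B * q) by (apply Rmult_le_compat_r; lra).
  assert (H2 : (F0 - e) * (1 + d) <= (F0 - e) * (t * q)) by (apply Rmult_le_compat_l; lra).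
  assert (H3 : G - B * q <= - (F0 * d / 2)) by nra.
  assert (H4 : t * (G - B * q) <= t * (- (F0 * d / 2))) by (apply Rmult_le_compat_l; lra).
  assert (H5 : (4 / (F0 * d) + 1) * (F0 * d / 2) <= t * (F0 * d / 2)) by (apply Rmult_le_compat_r; nra).
  nra.
Qed.

Lemma lo_arith F0 d e t q B G : 0 < F0 -> 0 < d -> d <= 1/2 -> e * (2 * (2 + d)) = F0 * d ->
  4 / (F0 * d) + 1 <= t -> 0 <= q -> B <= (F0 + e) * t -> F0 - e <= G -> t * q < 1 - d ->
  - q - t * (G - B * q) <= -1.
Proof.
  intros HF Hd Hd2 He Ht Hq HB HG Htq.
  assert (He0 : 0 < e) by nra.
  assert (Hk : 4 / (F0 * d) * (F0 * d) = 4) by (field; lra).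
  assert (0 < 4 / (F0 * d)) by (apply Rdiv_lt_0_compat; nra).
  assert (H1 : B * q <= (F0 + e) * t * q) by (apply Rmult_le_compat_r; lra).
  assert (H2 : (F0 + e) * (t * q) <= (F0 + e) * (1 - d)) by (apply Rmult_le_compat_l; lra).
  assert (H3 : F0 * d / 2 <= G - B * q) by nra.
  assert (H4 : t * (F0 * d / 2) <= t * (G - B * q)) by (apply Rmult_le_compat_l; lra).
  assert (H5 : (4 / (F0 * d) + 1) * (F0 * d / 2) <= t * (F0 * d / 2)) by (apply Rmult_le_compat_r; nra).
  nra.
Qed.

Lemma abs_b x : - Rabs x <= x <= Rabs x.
Proof. pose proof (Rle_abs x). pose proof (Rle_abs (-x)). rewrite Rabs_Ropp in *. lra. Qed.

Lemma pup_arith F0 d c1 a t q B G P : 0 < F0 -> 0 < d -> 0 <= a ->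
  2 * (9 * F0 + 1) / (F0 * d) + 2 * Rabs c1 / F0 + 1 <= t -> 0 <= q -> t * q <= 2 ->
  F0 / 2 * t <= B <= 3 / 2 * F0 * t -> F0 / 2 <= G -> P = B * q - G -> d < t * P ->
  P + t * (B * (q * q) - (B - c1 + 2 * a * q) * P) <= -1.
Proof.
  intros HF Hd Ha Ht Hq Htq HB HG HP HtP.
  pose proof (Rabs_pos c1) as Hc0. pose proof (abs_b c1) as Hc1.
  assert (0 <= 2 * (9 * F0 + 1) / (F0 * d)) by (apply Rdiv_le_0_compat; nra).
  assert (0 <= 2 * Rabs c1 / F0) by (apply Rdiv_le_0_compat; nra).
  assert (Ht1 : 1 <= t) by lra.
  assert (HPp : 0 < P) by nra.
  assert (H1 : B * q <= 3 / 2 * F0 * t * q) by (apply Rmult_le_compat_r; lra).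
  assert (H1' : P <= 3 * F0) by nra.
  assert (H2 : t * (B * (q * q)) <= 3 / 2 * F0 * ((t * q) * (t * q))).
  { assert (B * (q*q) <= 3/2 * F0 * t * (q * q)) by (apply Rmult_le_compat_r; nra). nra. }
  assert (H2' : (t * q) * (t * q) <= 4) by nra.
  assert (H3 : (B - Rabs c1) * P <= (B - c1 + 2 * a * q) * P) by (apply Rmult_le_compat_r; nra).
  assert (Hk1 : 2 * (9 * F0 + 1) / (F0 * d) * (F0 * d) = 2 * (9 * F0 + 1)) by (field; lra).
  assert (Hk2 : 2 * Rabs c1 / F0 * F0 = 2 * Rabs c1) by (field; lra).
  assert (H4 : F0 / 2 * t - Rabs c1 >= (9 * F0 + 1) / d).
  { assert (F0 / 2 * t >= F0 / 2 * (2 * (9 * F0 + 1) / (F0 * d) + 2 * Rabs c1 / F0 + 1)) by nra.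
    assert ((9 * F0 + 1) / d = F0 / 2 * (2 * (9 * F0 + 1) / (F0 * d))) by (field; lra).
    nra. }
  assert (Hk3 : (9 * F0 + 1) / d * d = 9 * F0 + 1) by (field; lra).
  assert (H5 : (F0 / 2 * t - Rabs c1) * d <= (B - Rabs c1) * (t * P)).
  { apply Rmult_le_compat; try nra. }
  nra.
Qed.

Lemma plo_arith F0 d c1 a t q B G P : 0 < F0 -> 0 < d -> 0 <= a ->
  2 * (9 * F0 + 1) / (F0 * d) + 2 * Rabs c1 / F0 + 1 <= t -> 0 <= q ->
  F0 / 2 * t <= B -> G <= 3 / 2 * F0 -> P = B * q - G -> t * P < - d ->
  - P - t * (B * (q * q) - (B - c1 + 2 * a * q) * P) <= -1.
Proof.
  intros HF Hd Ha Ht Hq HB HG HP HtP.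
  pose proof (Rabs_pos c1) as Hc0. pose proof (abs_b c1) as Hc1.
  assert (0 <= 2 * (9 * F0 + 1) / (F0 * d)) by (apply Rdiv_le_0_compat; nra).
  assert (0 <= 2 * Rabs c1 / F0) by (apply Rdiv_le_0_compat; nra).
  assert (Ht1 : 1 <= t) by lra.
  assert (HPp : P < 0) by nra.
  assert (HB0 : 0 <= B) by nra. assert (HBp : 0 <= B * q) by (apply Rmult_le_pos; lra).
  assert (H1' : - P <= 3 / 2 * F0) by nra.
  assert (H2 : 0 <= t * (B * (q * q))) by (apply Rmult_le_pos; [lra| apply Rmult_le_pos; [lra| apply Rmult_le_pos; lra]]).
  assert (Hk1 : 2 * (9 * F0 + 1) / (F0 * d) * (F0 * d) = 2 * (9 * F0 + 1)) by (field; lra).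
  assert (Hk2 : 2 * Rabs c1 / F0 * F0 = 2 * Rabs c1) by (field; lra).
  assert (H4 : F0 / 2 * t - Rabs c1 >= (9 * F0 + 1) / d).
  { assert (F0 / 2 * t >= F0 / 2 * (2 * (9 * F0 + 1) / (F0 * d) + 2 * Rabs c1 / F0 + 1)) by nra.
    assert ((9 * F0 + 1) / d = F0 / 2 * (2 * (9 * F0 + 1) / (F0 * d))) by (field; lra).
    nra. }
  assert (Hk3 : (9 * F0 + 1) / d * d = 9 * F0 + 1) by (field; lra).
  assert (H3 : F0 / 2 * t - Rabs c1 <= B - c1 + 2 * a * q) by nra.
  assert (H5 : (F0 / 2 * t - Rabs c1) * d <= (B - c1 + 2 * a * q) * (- (t * P))).
  { apply Rmult_le_compat; try nra. }
  nra.
Qed.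


Definition ODEH F0 c1 a b (W Q : R -> R) t0 :=
  0 < F0 /\ 0 < a /\ 0 < b /\ (forall t, 0 < W t) /\ (forall t, ex_derive W t) /\
  (forall t, Derive W t = W t * Q t) /\ (forall t, ex_derive Q t) /\
  (forall t, Derive Q t = F0 + c1 * Q t - a * (Q t * Q t) - b * W t * Q t) /\ 0 <= Q t0.

Ltac unpack H := destruct H as (HF0 & Ha & Hb & HW & HdW & HDW & HdQ & HDQ & HQ0).

Lemma abs_bounds x : - Rabs x <= x <= Rabs x.
Proof. pose proof (Rle_abs x). pose proof (Rle_abs (-x)). rewrite Rabs_Ropp in *. lra. Qed.

Lemma exd_opp (f : R -> R) t : ex_derive f t -> ex_derive (fun t => - f t) t.
Proof. intros. auto_derive. auto. Qed.

Lemma exd_minus (f g : R -> R) t : ex_derive f t -> ex_derive g t -> ex_derive (fun t => f t - g t) t.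
Proof. intros. auto_derive. auto. Qed.

Lemma A1 F0 c1 a b W Q t0 : ODEH F0 c1 a b W Q t0 -> forall t, t0 <= t -> 0 <= Q t.
Proof.
  intros H. unpack H.
  set (d := F0 / (Rabs c1 + a + F0 + 1)).
  pose proof (Rabs_pos c1) as Hc.
  assert (Hd : 0 < d) by (unfold d; apply Rdiv_lt_0_compat; lra).
  assert (Hd2 : d * (Rabs c1 + a + F0 + 1) = F0) by (unfold d; field; lra).
  intros t Ht.
  cut (- Q t <= 0). lra.
  revert t Ht. apply (LBL (fun t => - Q t) t0 0 d).
  - intros t. apply exd_opp. auto.
  - auto.
  - lra.
  - intros t Ht Hb'. rewrite Derive_opp, HDQ.
    set (q := Q t) in *. pose proof (abs_bounds c1).
    assert (d < 1) by nra.
    assert (c1 * q >= - Rabs c1 * d) by nra.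
    assert (q * q <= d) by nra.
    pose proof (HW t).
    assert (b * W t * q <= 0). { assert (0 < b * W t) by nra. nra. }
    nra.
Qed.

Definition Qmax F0 c1 a (Q : R -> R) t0 := Q t0 + (Rabs c1 + F0) / a + 1.

Lemma A2 F0 c1 a b W Q t0 : ODEH F0 c1 a b W Q t0 -> forall t, t0 <= t -> Q t <= Qmax F0 c1 a Q t0.
Proof.
  intros H. pose proof H as H'. unpack H.
  apply (LBL Q t0 _ 1 HdQ ltac:(lra)).
  - unfold Qmax. assert (0 <= (Rabs c1 + F0) / a). apply Rdiv_le_0_compat. pose proof (Rabs_pos c1). lra. lra. lra.
  - intros t Ht Hb'. rewrite HDQ. unfold Qmax in Hb'.
    pose proof (A1 _ _ _ _ _ _ _ H' t Ht).
    set (q := Q t) in *. pose proof (abs_bounds c1).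
    assert (Hk : (Rabs c1 + F0) / a * a = Rabs c1 + F0) by (field; lra).
    assert (Haq : a * q >= Rabs c1 + F0 + a).
    { assert (q >= (Rabs c1 + F0) / a + 1) by lra.
      assert (a * q >= a * ((Rabs c1 + F0) / a + 1)) by (apply Rle_ge, Rmult_le_compat_l; lra).
      nra. }
    assert (q >= 1). { assert ((Rabs c1 + F0)/a >= 0). apply Rle_ge, Rdiv_le_0_compat. lra. lra. lra. }
    assert (a * (q * q) >= (Rabs c1 + F0) * q) by nra.
    pose proof (HW t).
    assert (0 <= b * W t * q). { assert (0 < b * W t) by nra. nra. }
    nra.
Qed.

Lemma A3 F0 c1 a b W Q t0 : ODEH F0 c1 a b W Q t0 -> forall t1 t2, t0 <= t1 -> t1 <= t2 -> W t1 <= W t2.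
Proof.
  intros H. pose proof H as H'. unpack H. intros t1 t2 H1 H2.
  pose proof (mvt_ge W t1 t2 0 HdW H2) as M.
  cut (0 * (t2 - t1) <= W t2 - W t1). lra.
  apply M. intros t Ht. rewrite HDW. pose proof (HW t). pose proof (A1 _ _ _ _ _ _ _ H' t ltac:(lra)). nra.
Qed.

Lemma A4 F0 c1 a b W Q t0 : ODEH F0 c1 a b W Q t0 -> forall M, exists T, t0 <= T /\ forall t, T <= t -> M <= W t.
Proof.
  intros H. pose proof H as H'. unpack H. intros M.
  set (Qm := Qmax F0 c1 a Q t0).
  pose proof (A1 _ _ _ _ _ _ _ H') as HQp. pose proof (A2 _ _ _ _ _ _ _ H') as HQm. fold Qm in HQm.
  pose proof (Rabs_pos c1) as Hc. pose proof (abs_bounds c1).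
  assert (HQm0 : 0 <= Qm) by (pose proof (HQm t0 ltac:(lra)); lra).
  set (C := Rabs c1 + a * Qm).
  assert (HC : 0 <= C) by (unfold C; nra).
  set (Phi := fun t => Q t + b * W t + C * ln (W t) - F0 * t).
  assert (HdPhi : forall t, is_derive Phi t (Derive Q t + b * Derive W t + C * (Derive W t / W t) - F0)).
  { intros t. unfold Phi. pose proof (HW t). auto_derive. repeat split; auto. change (fun x => W x) with W; change (fun x => Q x) with Q. unfold Rdiv. ring. }
  assert (HexPhi : forall t, ex_derive Phi t) by (intros t; eexists; apply HdPhi).
  assert (Hmon : forall t, t0 <= t -> Phi t0 <= Phi t).
  { intros t Ht. pose proof (mvt_ge Phi t0 t 0 HexPhi Ht) as M'.
    cut (0 * (t - t0) <= Phi t - Phi t0). lra. apply M'. intros s Hs.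
    rewrite (is_derive_unique _ _ _ (HdPhi s)). rewrite HDQ, HDW.
    pose proof (HW s). pose proof (HQp s ltac:(lra)). pose proof (HQm s ltac:(lra)).
    replace (W s * Q s / W s) with (Q s) by (field; lra).
    set (q := Q s) in *.
    assert (0 <= q * (Qm - q)) by nra. assert (a * (q * q) <= a * Qm * q) by nra.
    assert (c1 * q >= - Rabs c1 * q) by nra.
    unfold C. nra. }
  set (M' := Rmax M 1).
  assert (HM' : M <= M' /\ 1 <= M') by (split; [apply Rmax_l|apply Rmax_r]).
  set (t1 := Rmax t0 ((Qm + b * M' + C * ln M' - Phi t0) / F0 + 1)).
  assert (Ht1 : t0 <= t1 /\ (Qm + b * M' + C * ln M' - Phi t0) / F0 + 1 <= t1) by (split; [apply Rmax_l|apply Rmax_r]).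
  assert (HW1 : M' <= W t1).
  { destruct (Rle_or_lt M' (W t1)) as [|Hlt]; auto. exfalso.
    pose proof (Hmon t1 (proj1 Ht1)).
    assert (ln (W t1) < ln M') by (apply ln_increasing; auto).
    assert (C * ln (W t1) <= C * ln M') by (apply Rmult_le_compat_l; lra).
    assert (F0 * ((Qm + b * M' + C * ln M' - Phi t0) / F0 + 1) <= F0 * t1) by (apply Rmult_le_compat_l; lra).
    assert (F0 * ((Qm + b * M' + C * ln M' - Phi t0) / F0 + 1) = Qm + b * M' + C * ln M' - Phi t0 + F0) by (field; lra).
    pose proof (HQm t1 (proj1 Ht1)).
    assert (b * W t1 <= b * M') by (apply Rmult_le_compat_l; lra).
    unfold Phi in *. lra. }
  exists t1. split. lra. intros t Ht. pose proof (A3 _ _ _ _ _ _ _ H' t1 t (proj1 Ht1) Ht). lra.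
Qed.

Lemma A5 F0 c1 a b W Q t0 : ODEH F0 c1 a b W Q t0 -> forall eta, 0 < eta -> exists T, t0 <= T /\ forall t, T <= t -> Q t <= eta.
Proof.
  intros H. pose proof H as H'. unpack H. intros eta Heta.
  set (Qm := Qmax F0 c1 a Q t0).
  pose proof (A1 _ _ _ _ _ _ _ H') as HQp. pose proof (A2 _ _ _ _ _ _ _ H') as HQm. fold Qm in HQm.
  pose proof (Rabs_pos c1) as Hc. pose proof (abs_bounds c1).
  assert (HQm0 : 0 <= Qm) by (pose proof (HQm t0 ltac:(lra)); lra).
  set (Fm := F0 + Rabs c1 * Qm).
  destruct (A4 _ _ _ _ _ _ _ H' ((Fm + 1) / (b * eta))) as [T [HT0 HT]].
  destruct (EVB (fun t => Q t - eta) T 1) as [T' HT'].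
  - intros t. auto_derive. auto.
  - lra.
  - intros t Ht Hp. rewrite Derive_minus, Derive_const, HDQ; auto; [|apply ex_derive_const].
    pose proof (HT t Ht). pose proof (HQm t ltac:(lra)).
    set (q := Q t) in *.
    assert (Hk : (Fm + 1) / (b * eta) * (b * eta) = Fm + 1) by (field; lra).
    assert (HbW : b * W t * eta >= Fm + 1).
    { assert (b * eta * ((Fm + 1) / (b * eta)) <= b * eta * W t) by (apply Rmult_le_compat_l; nra). nra. }
    assert (b * W t * q >= b * W t * eta) by (pose proof (HW t); apply Rle_ge, Rmult_le_compat_l; nra).
    assert (c1 * q <= Rabs c1 * Qm) by nra.
    assert (0 <= a * (q * q)) by nra.
    unfold Fm in *. lra.
  - exists (Rmax T' t0). split. apply Rmax_r. intros t Ht. pose proof (HT' t ltac:(pose proof (Rmax_l T' t0); lra)). lra.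
Qed.

Lemma A6 F0 c1 a b W Q t0 : ODEH F0 c1 a b W Q t0 -> ev_lim (fun t => b * W t / t) F0.
Proof.
  intros H. pose proof H as H'. unpack H.
  set (Qm := Qmax F0 c1 a Q t0).
  pose proof (A1 _ _ _ _ _ _ _ H') as HQp. pose proof (A2 _ _ _ _ _ _ _ H') as HQm. fold Qm in HQm.
  pose proof (Rabs_pos c1) as Hc. pose proof (abs_bounds c1).
  assert (HQm0 : 0 <= Qm) by (pose proof (HQm t0 ltac:(lra)); lra).
  set (Z := fun t => Q t + b * W t).
  assert (HdZ : forall t, is_derive Z t (Derive Q t + b * Derive W t)).
  { intros t. unfold Z. auto_derive. repeat split; auto. change (fun x => W x) with W; change (fun x => Q x) with Q. ring. }
  assert (HZ : ev_lim (fun t => Z t / t) F0).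
  { apply LIMDER. intros t; eexists; apply HdZ.
    intros eps Heps.
    set (eta := Rmin 1 (eps / (Rabs c1 + a + 1))).
    assert (Heta : 0 < eta /\ eta <= 1 /\ eta <= eps / (Rabs c1 + a + 1)).
    { unfold eta. split; [apply Rmin_case; [lra|apply Rdiv_lt_0_compat; lra]|split; [apply Rmin_l|apply Rmin_r]]. }
    destruct (A5 _ _ _ _ _ _ _ H' eta (proj1 Heta)) as [T [HT0 HT]].
    exists T. intros t Ht. rewrite (is_derive_unique _ _ _ (HdZ t)), HDQ, HDW.
    pose proof (HT t Ht). pose proof (HQp t ltac:(lra)).
    set (q := Q t) in *.
    assert (Hk : eps / (Rabs c1 + a + 1) * (Rabs c1 + a + 1) = eps) by (field; lra).
    assert ((Rabs c1 + a) * eta <= eps) by nra.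
    assert (q * q <= eta) by nra.
    apply Rabs_le. split; nra. }
  assert (HQt : ev_lim (fun t => Q t / t) 0).
  { intros eps Heps. exists (Rmax (Rmax t0 1) (Qm / eps)). intros t Ht.
    pose proof (Rmax_l (Rmax t0 1) (Qm / eps)). pose proof (Rmax_r (Rmax t0 1) (Qm / eps)).
    pose proof (Rmax_l t0 1). pose proof (Rmax_r t0 1).
    pose proof (HQp t ltac:(lra)). pose proof (HQm t ltac:(lra)).
    rewrite Rminus_0_r. rewrite Rabs_right.
    2: { apply Rle_ge, Rdiv_le_0_compat; lra. }
    apply (Rmult_le_reg_r t). lra. unfold Rdiv. rewrite Rmult_assoc, Rinv_l, Rmult_1_r by lra.
    assert (Qm / eps * eps = Qm) by (field; lra). nra. }
  pose proof (ev_lim_minus _ _ _ _ HZ HQt) as Hm. rewrite Rminus_0_r in Hm.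
  apply (ev_lim_ext (fun t => Z t / t - Q t / t) _ _ 1); [intros t Ht; unfold Z; field; lra | exact Hm].
Qed.

Lemma Aset F0 c1 a b W Q t0 : ODEH F0 c1 a b W Q t0 -> forall e, 0 < e -> forall T0, exists T, T0 <= T /\
  forall t, T <= t -> 1 <= t /\ t0 <= t /\ 0 <= Q t <= 1 /\ Q t <= e /\
    Rabs (c1 * Q t - a * (Q t * Q t)) <= e /\ (F0 - e) * t <= b * W t <= (F0 + e) * t.
Proof.
  intros H. pose proof H as H'. unpack H. intros e He T0.
  pose proof (A1 _ _ _ _ _ _ _ H') as HQp.
  pose proof (Rabs_pos c1) as Hc. pose proof (abs_bounds c1).
  set (eta := Rmin 1 (e / (Rabs c1 + a + 1))).
  assert (Heta : 0 < eta /\ eta <= 1 /\ eta <= e / (Rabs c1 + a + 1)).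
  { unfold eta. split; [apply Rmin_case; [lra|apply Rdiv_lt_0_compat; lra]|split; [apply Rmin_l|apply Rmin_r]]. }
  assert (Hk : e / (Rabs c1 + a + 1) * (Rabs c1 + a + 1) = e) by (field; lra).
  assert (Heta2 : eta <= e) by nra.
  destruct (A5 _ _ _ _ _ _ _ H' eta (proj1 Heta)) as [T2 [HT20 HT2]].
  destruct (A6 _ _ _ _ _ _ _ H' e He) as [T1 HT1].
  exists (Rmax (Rmax T0 T1) (Rmax T2 1)). 
  pose proof (Rmax_l (Rmax T0 T1) (Rmax T2 1)). pose proof (Rmax_r (Rmax T0 T1) (Rmax T2 1)).
  pose proof (Rmax_l T0 T1). pose proof (Rmax_r T0 T1). pose proof (Rmax_l T2 1). pose proof (Rmax_r T2 1).
  split. lra. intros t Ht.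
  pose proof (HT2 t ltac:(lra)). pose proof (HQp t ltac:(lra)). pose proof (HT1 t ltac:(lra)) as Hw.
  apply abs_le_e in Hw.
  assert (Hw2 : b * W t / t * t = b * W t) by (field; lra).
  set (q := Q t) in *.
  split. lra. split. lra. split. lra. split. lra. split.
  - assert ((Rabs c1 + a) * eta <= e) by nra.
    assert (q * q <= eta) by nra.
    apply Rabs_le. split; nra.
  - split; nra.
Qed.

Lemma A7 F0 c1 a b W Q t0 : ODEH F0 c1 a b W Q t0 -> ev_lim (fun t => t * Q t) 1.
Proof.
  intros H. pose proof H as H'. unpack H.
  intros eps Heps.
  set (d := Rmin eps (1/2)).
  assert (Hd : 0 < d /\ d <= eps /\ d <= 1/2).
  { unfold d. split; [apply Rmin_case; lra|split; [apply Rmin_l|apply Rmin_r]]. }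
  set (e := F0 * d / (2 * (2 + d))).
  assert (He : e * (2 * (2 + d)) = F0 * d) by (unfold e; field; lra).
  assert (He0 : 0 < e) by (unfold e; apply Rdiv_lt_0_compat; nra).
  destruct (Aset _ _ _ _ _ _ _ H' e He0 (4 / (F0 * d) + 1)) as [T [HT0 HT]].
  destruct (EVB (fun t => t * Q t - (1 + d)) T 1) as [Tu HTu].
  - intros t. auto_derive. auto.
  - lra.
  - intros t Ht Hp.
    assert (Hder : Derive (fun t : R => t * Q t - (1 + d)) t = Q t + t * Derive Q t).
    { apply is_derive_unique. auto_derive. auto. change (fun x => Q x) with Q. ring. }
    rewrite Hder, HDQ.
    destruct (HT t Ht) as (H1 & H2 & H3 & H4 & H5 & H6).
    apply abs_le_e in H5.
    replace (F0 + c1 * Q t - a * (Q t * Q t) - b * W t * Q t) with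
      ((F0 + (c1 * Q t - a * (Q t * Q t))) - b * W t * Q t) by ring.
    apply (up_arith F0 d e); try lra.
  - destruct (EVB (fun t => (1 - d) - t * Q t) T 1) as [Tl HTl].
    + intros t. auto_derive. auto.
    + lra.
    + intros t Ht Hp.
      assert (Hder : Derive (fun t : R => (1 - d) - t * Q t) t = - Q t - t * Derive Q t).
      { apply is_derive_unique. auto_derive. auto. change (fun x => Q x) with Q. ring. }
      rewrite Hder, HDQ.
      destruct (HT t Ht) as (H1 & H2 & H3 & H4 & H5 & H6).
      apply abs_le_e in H5.
      replace (F0 + c1 * Q t - a * (Q t * Q t) - b * W t * Q t) with
        ((F0 + (c1 * Q t - a * (Q t * Q t))) - b * W t * Q t) by ring.
      apply (lo_arith F0 d e); try lra.
    + exists (Rmax Tu Tl). intros t Ht.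
      pose proof (HTu t ltac:(pose proof (Rmax_l Tu Tl); lra)).
      pose proof (HTl t ltac:(pose proof (Rmax_r Tu Tl); lra)).
      apply Rabs_le. lra.
Qed.

Lemma A8 F0 c1 a b W Q t0 : ODEH F0 c1 a b W Q t0 ->
  ev_lim (fun t => t * (b * W t * Q t - (F0 + c1 * Q t - a * (Q t * Q t)))) 0.
Proof.
  intros H. pose proof H as H'. unpack H.
  set (Pf := fun t => b * W t * Q t - (F0 + c1 * Q t - a * (Q t * Q t))).
  change (ev_lim (fun t => t * Pf t) 0).
  intros d Hd.
  destruct (Aset _ _ _ _ _ _ _ H' (F0/2) ltac:(lra) (2 * (9 * F0 + 1) / (F0 * d) + 2 * Rabs c1 / F0 + 1)) as [TA [HTA0 HTA]].
  destruct (A7 _ _ _ _ _ _ _ H' 1 ltac:(lra)) as [T7 HT7].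
  set (T := Rmax TA T7).
  assert (HT : TA <= T /\ T7 <= T) by (split; [apply Rmax_l|apply Rmax_r]).
  assert (Hder : forall t, is_derive (fun t => t * Pf t) t
     (Pf t + t * (b * W t * (Q t * Q t) - (b * W t - c1 + 2 * a * Q t) * Pf t))).
  { intros t. unfold Pf. auto_derive. repeat split; auto.
    change (fun x => Q x) with Q; change (fun x => W x) with W. rewrite HDW, HDQ. match goal with |- ?x = ?y => change (@eq R x y) end. ring. }
  assert (Hex : forall t, ex_derive (fun t => t * Pf t) t) by (intros t; eexists; apply Hder).
  assert (HderD : forall t : R, Derive (fun t : R => t * Pf t) t =
     Pf t + t * (b * W t * (Q t * Q t) - (b * W t - c1 + 2 * a * Q t) * Pf t)) by (intros; apply is_derive_unique, Hder).
  destruct (EVB (fun t => t * Pf t - d) T 1) as [Tu HTu].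
  - intros t. apply exd_minus. apply Hex. apply ex_derive_const.
  - lra.
  - intros t Ht Hp.
    rewrite Derive_minus, Derive_const, HderD; [|apply Hex|apply ex_derive_const].
    destruct (HTA t ltac:(lra)) as (H1 & H2 & H3 & H4 & H5 & H6).
    pose proof (HT7 t ltac:(lra)) as H7. apply abs_le_e in H7. apply abs_le_e in H5.
    cut (Pf t + t * (b * W t * (Q t * Q t) - (b * W t - c1 + 2 * a * Q t) * Pf t) <= -1). lra.
    apply (pup_arith F0 d c1 a t (Q t) (b * W t) (F0 + c1 * Q t - a * (Q t * Q t)) (Pf t)); try lra.
    unfold Pf; ring.
  - destruct (EVB (fun t => - d - t * Pf t) T 1) as [Tl HTl].
    + intros t. apply exd_minus. apply ex_derive_const. apply Hex.
    + lra.
    + intros t Ht Hp.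
      rewrite Derive_minus, Derive_const, HderD; [|apply ex_derive_const|apply Hex].
      destruct (HTA t ltac:(lra)) as (H1 & H2 & H3 & H4 & H5 & H6).
      apply abs_le_e in H5.
        cut (- Pf t - t * (b * W t * (Q t * Q t) - (b * W t - c1 + 2 * a * Q t) * Pf t) <= -1). lra.
      apply (plo_arith F0 d c1 a t (Q t) (b * W t) (F0 + c1 * Q t - a * (Q t * Q t)) (Pf t)); try lra.
      unfold Pf; ring.
    + exists (Rmax Tu Tl). intros t Ht.
      pose proof (HTu t ltac:(pose proof (Rmax_l Tu Tl); lra)).
      pose proof (HTl t ltac:(pose proof (Rmax_r Tu Tl); lra)).
      apply Rabs_le. lra.
Qed.

Lemma A9 F0 c1 a b W Q t0 : ODEH F0 c1 a b W Q t0 ->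
  ev_lim (fun t => t * (W t * Q t - F0 / b)) (c1 / b).
Proof.
  intros H. pose proof H as H'. unpack H.
  pose proof (A8 _ _ _ _ _ _ _ H') as H8. pose proof (A7 _ _ _ _ _ _ _ H') as H7.
  assert (HQ : ev_lim Q 0).
  { intros eps Heps. destruct (Aset _ _ _ _ _ _ _ H' eps Heps 0) as [T [_ HT]].
    exists T. intros t Ht. destruct (HT t Ht) as (_ & _ & H3 & H4 & _). rewrite Rminus_0_r, Rabs_right; lra. }
  pose proof (ev_lim_mult _ _ _ _ (ev_lim_const c1) H7) as Hc.
  pose proof (ev_lim_mult _ _ _ _ (ev_lim_const a) (ev_lim_mult _ _ _ _ H7 HQ)) as Ha2.
  pose proof (ev_lim_mult _ _ _ _ (ev_lim_const (1 / b)) (ev_lim_minus _ _ _ _ (ev_lim_plus _ _ _ _ H8 Hc) Ha2)) as Hall.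
  replace (1 / b * (0 + c1 * 1 - a * (1 * 0))) with (c1 / b) in Hall by (field; lra).
  refine (ev_lim_ext _ _ _ 0 _ Hall). intros t Ht. field. lra.
Qed.


Lemma qalg N m beta r U U1 U2 V V1 X :
  0 < m -> m < 1 -> 3 <= N -> 0 < r -> 0 < U -> 0 < V ->
  U1 = m * U / V * V1 ->
  (N - 1) / m * (U2 + (N - 1) / r * U1) + 2 * beta / (1 - m) * V + beta * r * V1 = 0 ->
  X * U = V ->
  let Q := 2 + (1 - m) / m * (r * U1 / U) in
  (1 - m) / m * (r * U1 / U + r * (r * U2) / U - r * U1 * (r * U1) / (U * U)) =
  2 * (N - 2 - N * m) / (1 - m) + (- (N - 2 - (N + 2) * m) / (1 - m)) * Q
   - m / (1 - m) * (Q * Q) - beta / (N - 1) * (r * r * X) * Q.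
Proof.
  intros Hm Hm1 HN Hr HU HV E1 E2 E3 Q.
  assert (EV1 : V1 = U1 * V / (m * U)) by (rewrite E1; field; lra).
  assert (EX : X = V / U) by (rewrite <- E3; field; lra).
  assert (EU2 : U2 = - ((N - 1) / r * U1) - m / (N - 1) * (2 * beta / (1 - m) * V + beta * r * V1)).
  { apply (Rmult_eq_reg_l ((N - 1) / m)). 2: { apply Rgt_not_eq. apply Rdiv_lt_0_compat; lra. }
    assert (E2' : (N - 1) / m * (U2 + (N - 1) / r * U1) = - (2 * beta / (1 - m) * V + beta * r * V1)) by lra.
    replace ((N - 1) / m * U2) with ((N - 1) / m * (U2 + (N - 1) / r * U1) - (N - 1) / m * ((N - 1) / r * U1)) by ring.
    rewrite E2'. field. repeat split; lra. }
  rewrite EU2, EX. unfold Q. rewrite EV1. field. repeat split; lra.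
Qed.

Ltac etafix := repeat match goal with |- context [Derive (fun x => ?f x) ?y] => change (Derive (fun x => f x) y) with (Derive f y) end.

Definition Qfun (m : R) (v : R -> R) (t : R) :=
  2 + (1 - m) / m * (exp t * Derive (vpow v m) (exp t) / vpow v m (exp t)).

Lemma du_eq (m : R) (v : R -> R) r : 0 < v r -> ex_derive v r ->
  Derive (vpow v m) r = m * vpow v m r / v r * Derive v r.
Proof.
  intros Hv Hd. unfold vpow, Rpower. apply is_derive_unique. auto_derive.
  repeat split; auto. etafix. field. lra.
Qed.

Lemma exd_u (m : R) (v : R -> R) r : 0 < v r -> ex_derive v r -> ex_derive (vpow v m) r.
Proof. intros. unfold vpow, Rpower. auto_derive. repeat split; auto. Qed.

Lemma at_right_eps (f : R -> R) (l : R) : filterlim f (at_right 0) (locally l) ->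
  forall eps, 0 < eps -> exists d, 0 < d /\ forall y, 0 < y < d -> Rabs (f y - l) < eps.
Proof.
  intros H eps He.
  destruct (proj1 (filterlim_locally _ _) H (mkposreal eps He)) as [d Hd].
  exists d. split. apply cond_pos. intros y Hy. apply (Hd y).
  change (Rabs (y - 0) < d). rewrite Rminus_0_r, Rabs_right; lra. lra.
Qed.

Lemma concrete_ODE (N m beta lambda : R) (v : R -> R) : 3 <= N -> 0 < m -> m < 1 -> 0 < N - 2 - N * m ->
  0 < beta -> 0 < lambda -> is_radial_solution N m beta lambda v ->
  exists t0, ODEH (2 * (N - 2 - N * m) / (1 - m)) (- (N - 2 - (N + 2) * m) / (1 - m)) (m / (1 - m))
     (beta / (N - 1)) (wfun m v) (Qfun m v) t0.
Proof.
  intros HN Hm Hm1 HF Hb Hl Hs.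
  destruct Hs as (Hpos & Hv0 & Hlimv & Hlimu & Hdv & Hdu & Hddu & Hrad).
  assert (Hvp : forall t, 0 < v (exp t)) by (intros; apply Hpos; left; apply exp_pos).
  assert (Hup : forall t, 0 < vpow v m (exp t)) by (intros; unfold vpow, Rpower; apply exp_pos).
  assert (HdW : forall t, is_derive (wfun m v) t (wfun m v t * Qfun m v t)).
  { intros t. unfold wfun. pose proof (Hvp t). pose proof (Hdv (exp t) (exp_pos t)).
    unfold Qfun. rewrite du_eq; auto.
    unfold Rpower at 1. auto_derive. repeat split; auto.
    pose proof (Hup t). etafix. unfold Rpower. field. split; lra. }
  assert (HdQ : forall t, is_derive (Qfun m v) t
     (2 * (N - 2 - N * m) / (1 - m) + (- (N - 2 - (N + 2) * m) / (1 - m)) * Qfun m v t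
      - m / (1 - m) * (Qfun m v t * Qfun m v t) - beta / (N - 1) * wfun m v t * Qfun m v t)).
  { intros t. pose proof (Hvp t). pose proof (Hup t). pose proof (exp_pos t).
    pose proof (Hdv (exp t) (exp_pos t)). pose proof (Hdu (exp t) (exp_pos t)). pose proof (Hddu (exp t) (exp_pos t)).
    unfold Qfun. auto_derive. repeat split; auto. lra.
    etafix.
    assert (EX : Rpower (v (exp t)) (1 - m) * vpow v m (exp t) = v (exp t)).
    { unfold vpow. rewrite <- Rpower_plus. replace (1 - m + m) with 1 by ring. apply Rpower_1; auto. }
    pose proof (qalg N m beta (exp t) (vpow v m (exp t)) (Derive (vpow v m) (exp t))
      (Derive (Derive (vpow v m)) (exp t)) (v (exp t)) (Derive v (exp t)) (Rpower (v (exp t)) (1 - m))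
      Hm Hm1 HN (exp_pos t) (Hup t) (Hvp t) (du_eq m v (exp t) (Hvp t) (Hdv (exp t) (exp_pos t)))
      (Hrad (exp t) (exp_pos t)) EX) as HQ. simpl in HQ.
    unfold Qfun, wfun. replace (exp (2 * t)) with (exp t * exp t) by (rewrite <- exp_plus; f_equal; ring).
    rewrite <- HQ. field. split; lra. }
  destruct (at_right_eps _ _ Hlimu 1 ltac:(lra)) as [d1 [Hd1 H1]].
  destruct (at_right_eps _ _ Hlimv (lambda / 2) ltac:(lra)) as [d2 [Hd2 H2]].
  set (c := Rpower (lambda / 2) m).
  assert (Hc : 0 < c) by (unfold c, Rpower; apply exp_pos).
  set (k := 2 * m / (1 - m)).
  assert (Hk : 0 < k) by (unfold k; apply Rdiv_lt_0_compat; lra).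
  set (r0 := Rmin (Rmin d1 d2) (k * c) / 2).
  assert (Hr0 : 0 < r0 /\ r0 < d1 /\ r0 < d2 /\ r0 <= k * c / 2).
  { pose proof (Rmin_l (Rmin d1 d2) (k * c)). pose proof (Rmin_r (Rmin d1 d2) (k * c)).
    pose proof (Rmin_l d1 d2). pose proof (Rmin_r d1 d2).
    assert (0 < Rmin (Rmin d1 d2) (k * c)) by (repeat apply Rmin_case; nra).
    unfold r0. lra. }
  exists (ln r0).
  assert (HUc : c <= vpow v m r0).
  { pose proof (H2 r0 ltac:(lra)) as H2'. apply abs_lt_e in H2'.
    unfold c, vpow, Rpower. apply Rlt_le, exp_increasing. apply Rmult_lt_compat_l. lra.
    apply ln_increasing; lra. }
  pose proof (H1 r0 ltac:(lra)) as H1'. rewrite Rminus_0_r in H1'. apply abs_lt_e in H1'.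
  assert (HQ0 : 0 <= Qfun m v (ln r0)).
  { unfold Qfun. rewrite exp_ln by lra.
    set (U := vpow v m r0) in *. set (U1 := Derive (vpow v m) r0) in *.
    assert (HU : 0 < U) by lra.
    assert (r0 * U1 > - (k * U)) by nra.
    assert (r0 * U1 / U > - k).
    { apply (Rmult_lt_reg_r U). auto. unfold Rdiv. rewrite Rmult_assoc, Rinv_l, Rmult_1_r by lra. lra. }
    assert ((1 - m) / m * k = 2) by (unfold k; field; lra).
    assert (0 < (1 - m) / m) by (apply Rdiv_lt_0_compat; lra).
    nra. }
  split. apply Rdiv_lt_0_compat; lra. split. apply Rdiv_lt_0_compat; lra. split. apply Rdiv_lt_0_compat; lra.
  split. intros t. unfold wfun, Rpower. pose proof (exp_pos (2 * t)). pose proof (exp_pos ((1 - m) * ln (v (exp t)))). nra.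
  split. intros t. eexists. apply HdW.
  split. intros t. apply is_derive_unique, HdW.
  split. intros t. eexists. apply HdQ.
  split. intros t. apply is_derive_unique, HdQ.
  exact HQ0.
Qed.


Lemma Derive_lin (f : R -> R) c s : ex_derive f s -> Derive (fun s => f s - c * s) s = Derive f s - c.
Proof. intros. apply is_derive_unique. auto_derive. auto. etafix. ring. Qed.

Lemma ev_lim_exp f l : ev_lim f l -> ev_lim (fun t => f (exp t)) l.
Proof.
  intros H eps He. destruct (H eps He) as [T HT]. exists (ln (Rmax T 1)). intros t Ht.
  apply HT. pose proof (Rmax_l T 1). pose proof (Rmax_r T 1).
  assert (exp (ln (Rmax T 1)) <= exp t).
  { destruct Ht as [Ht|Ht]. left. apply exp_increasing; auto. rewrite Ht. lra. }
  rewrite exp_ln in H2 by lra. lra.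
Qed.

Lemma ev_lim_ln f l : ev_lim f l -> ev_lim (fun s => f (ln s)) l.
Proof.
  intros H eps He. destruct (H eps He) as [T HT]. exists (exp T). intros s Hs.
  apply HT. pose proof (exp_pos T). rewrite <- (ln_exp T).
  destruct Hs as [Hs|Hs]. left. apply ln_increasing; auto. rewrite Hs. lra.
Qed.

Theorem lemma2p3 (n : nat) (m beta lambda : R) (v : R -> R) :
  (3 <= n)%nat ->
  0 < m -> m < (INR n - 2) / INR n ->
  m <> (INR n - 2) / (INR n + 2) ->
  0 < beta -> 0 < lambda ->
  is_radial_solution (INR n) m beta lambda v ->
  let L := - ((INR n - 1) * (INR n - 2 - (INR n + 2) * m)) / ((1 - m) * beta) in
  is_lim (fun s => hfun (INR n) m beta v s / ln s) p_infty L /\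
  is_lim (fun s => s * Derive (hfun (INR n) m beta v) s) p_infty L.
Proof.
  intros Hn Hm Hmn _ Hb Hl Hs L.
  assert (HN : 3 <= INR n) by (apply le_INR in Hn; simpl in Hn; lra).
  set (N := INR n) in *.
  assert (HmN : N * m < N - 2).
  { apply (Rmult_lt_compat_l N) in Hmn; [|lra]. replace (N * ((N - 2) / N)) with (N - 2) in Hmn by (field; lra). lra. }
  assert (Hm1 : m < 1) by nra.
  destruct (concrete_ODE N m beta lambda v HN Hm Hm1 ltac:(lra) Hb Hl Hs) as [t0 H].
  pose proof (A9 _ _ _ _ _ _ _ H) as H9.
  assert (HL : - (N - 2 - (N + 2) * m) / (1 - m) / (beta / (N - 1)) = L) by (unfold L; field; lra).
  rewrite HL in H9.
  assert (HA : 2 * (N - 2 - N * m) / (1 - m) / (beta / (N - 1)) = 2 * (N - 1) * (N - 2 - N * m) / ((1 - m) * beta))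
    by (field; lra).
  rewrite HA in H9.
  set (A := 2 * (N - 1) * (N - 2 - N * m) / ((1 - m) * beta)) in *.
  destruct H as (_ & _ & _ & _ & HdW & HDW & _).
  assert (Hdh : forall s, ex_derive (hfun N m beta v) s).
  { intros s. unfold hfun. apply exd_minus. apply HdW. auto_derive. auto. }
  assert (HDh : forall s, Derive (hfun N m beta v) s = wfun m v s * Qfun m v s - A).
  { intros s. unfold hfun. fold A. rewrite Derive_lin by apply HdW. rewrite HDW. reflexivity. }
  assert (H2 : ev_lim (fun s => s * Derive (hfun N m beta v) s) L).
  { refine (ev_lim_ext _ _ _ 0 _ H9). intros t _. rewrite HDh. reflexivity. }
  split; [|apply ev_lim_is_lim, H2].
  set (k := fun t => hfun N m beta v (exp t)).
  assert (Hk : ev_lim (fun t => k t / t) L).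
  { apply LIMDER.
    - intros t. unfold k. auto_derive. apply Hdh.
    - refine (ev_lim_ext _ _ _ 0 _ (ev_lim_exp _ _ H2)). intros t _. simpl.
      unfold k. assert (De : Derive exp t = exp t) by (apply is_derive_unique, is_derive_exp).
      rewrite (Derive_comp (hfun N m beta v) exp t); [| apply Hdh | auto_derive; auto]. rewrite De. ring. }
  apply ev_lim_is_lim. refine (ev_lim_ext _ _ _ 1 _ (ev_lim_ln _ _ Hk)). intros s Hs1. simpl.
  unfold k. rewrite exp_ln by lra. reflexivity.
Qed.
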